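(* The family of inequalities $$\sum_{k\in[n]}-p_{k0,1}+\sum_{k\in T}(p_{k1,0}-p_{k1,1})\le 0\ (\emptyset\ne T\subseteq\{0,\dots,n-2\}),\quad \sum_{k\in[n]}-p_{k1,0}+\sum_{k\in T}(p_{k0,1}-p_{k0,0})\le 0\ (\emptyset\ne T\subsetneq[n]),$$ $$\sum_{k\in[n]}-p_{k0,0}+\sum_{k\in T}(p_{k1,1}-p_{k1,0})\le 0\ (\emptyset\ne T\subseteq\{0,\dots,n-2\}),$$ which characterizes the observed laws compatible with the IV model when $\ell=2$, consists of exactly $2^{n+1}-4$ sharp inequalities: none of them can be removed, i.e. for each inequality of the family there exists an observed law $\mathcal P$ (with $\mathcal P(Z=0),\mathcal P(Z=1)>0$) satisfying all other inequalities of the family but violating that one.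
   Context: $D\in\{0,1\}$ treatment; $Y$ outcome with values $\gamma_0<\dots<\gamma_{n-1}$; instrument $Z\in\{0,1\}$; $[n]=\{0,\dots,n-1\}$; $p_{yd,z}=\mathcal P(Y=\gamma_y,D=d\mid Z=z)$ for an observed law $\mathcal P$ of $(Y,D,Z)$. The IV model: potential outcomes $Y^{(d,z)}$ and treatments $D^{(z)}$ with exclusion $Y^{(d,0)}=Y^{(d,1)}$ a.s. (written $Y^{(d)}$), random assignment $Z\perp(Y^{(0)},Y^{(1)},D^{(0)},D^{(1)})$, and consistency $Y=(1-D)Y^{(0)}+DY^{(1)}$, $D=\mathbb 1(Z=0)D^{(0)}+\mathbb 1(Z=1)D^{(1)}$; $\mathcal P$ is compatible if it is induced by such a full data law. *)

(* Defs.v *)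
From HB Require Import structures.
From mathcomp Require Import all_boot all_order all_algebra.
From mathcomp Require Import reals.
Set Implicit Arguments. Unset Strict Implicit. Unset Printing Implicit Defensive.
Import Order.TTheory GRing.Theory Num.Theory.
Local Open Scope ring_scope.

(* A joint law of (Y, D, Z): P y d z = P(Y = gamma_y, D = d, Z = z),
   with d, z in {0,1} encoded as false = 0, true = 1. *)
Definition PZ (R : realType) (n : nat) (P : 'I_n -> bool -> bool -> R) (z : bool) : R :=
  \sum_(y < n) \sum_(d : bool) P y d z.

Definition obs_law (R : realType) (n : nat) (P : 'I_n -> bool -> bool -> R) : Prop :=
  (forall y d z, 0 <= P y d z) /\
  \sum_(y < n) \sum_(d : bool) \sum_(z : bool) P y d z = 1 /\
  (forall z, 0 < PZ P z).

Definition pcond (R : realType) (n : nat) (P : 'I_n -> bool -> bool -> R)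
  (y : 'I_n) (d z : bool) : R := P y d z / PZ P z.

(* Index set of the family: a tag f in {0,1,2} (which of the three
   sub-families) and a subset T of [n].
   f = 0 : emptyset <> T subseteq {0,...,n-2}
   f = 1 : emptyset <> T strict subset of [n]
   f = 2 : emptyset <> T subseteq {0,...,n-2} *)
Definition valid_idx (n : nat) (x : 'I_3 * {set 'I_n}) : bool :=
  let: (f, T) := x in
  if val f == 1%N then (T != set0) && (T != setT)
  else (T != set0) && [forall k in T, (val k < n.-1)%N].

Definition ineq_idx (n : nat) := {x : 'I_3 * {set 'I_n} | valid_idx x}.

Definition ineq_lhs (R : realType) (n : nat) (f : 'I_3) (T : {set 'I_n})
  (p : 'I_n -> bool -> bool -> R) : R :=
  match val f with
  | 0%N => \sum_(k < n) - p k false true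
           + \sum_(k in T) (p k true false - p k true true)
  | 1%N => \sum_(k < n) - p k true false
           + \sum_(k in T) (p k false true - p k false false)
  | _ => \sum_(k < n) - p k false false
           + \sum_(k in T) (p k true true - p k true false)
  end.

Definition lhs_at (R : realType) (n : nat) (i : ineq_idx n)
  (p : 'I_n -> bool -> bool -> R) : R :=
  ineq_lhs (val i).1 (val i).2 p.

(* Main.v *)
Require Import Defs.
From HB Require Import structures.
From mathcomp Require Import all_boot all_order all_algebra.
From mathcomp Require Import reals.
From mathcomp Require Import zify ring lra.
Import Order.TTheory GRing.Theory Num.Theory.

Lemma ltn_max_iff (n' : nat) (k : 'I_n'.+1) : (val k < n')%N = (k != ord_max).
Proof.
rewrite -(inj_eq val_inj) /= ltn_neqAle -ltnS ltn_ord andbT //.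
Qed.

Lemma count_f0 (n' : nat) :
  #|[pred T : {set 'I_n'.+1} | (T != set0) && [forall k in T, (val k < n')%N]]|
  = (2 ^ n' - 1)%N.
Proof.
have := cardD1 set0 (mem (powerset [set~ (@ord_max n')])).
rewrite card_powerset cardsC1 card_ord /=.
have -> : set0 \in powerset [set~ (@ord_max n')] by rewrite powersetE sub0set.
move=> ->; rewrite add1n subn1 /=; apply: eq_card => T.
rewrite !inE; congr (_ && _).
apply/forall_inP/subsetP => H k /H; rewrite !inE ltn_max_iff //.
Qed.

Lemma count_f1 (n' : nat) :
  #|[pred T : {set 'I_n'.+1} | (T != set0) && (T != setT)]|
  = (2 ^ n'.+1 - 2)%N.
Proof.
have := cardD1 set0 (mem [set: {set 'I_n'.+1}]).
rewrite -powersetT card_powerset cardsT card_ord powersetT in_setT.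
rewrite (cardD1 setT) /=.
have h : (set0 : {set 'I_n'.+1}) != setT.
  apply/eqP => h; have := in_setT (@ord0 n'); by rewrite -h inE.
rewrite !inE eq_sym h /= => ->.
rewrite add1n add1n subn2 /=; apply: eq_card => T.
rewrite !inE andbT andbC //.
Qed.

Lemma count_all (n' : nat) :
  #|{: ineq_idx n'.+1}| = (2 ^ n'.+2 - 4)%N.
Proof.
rewrite card_sig -sum1_card big_mkcond /=.
rewrite (eq_bigr (fun p : 'I_3 * {set 'I_n'.+1} => if valid_idx (p.1, p.2) then 1%N else 0%N)); last by case.
rewrite -(@pair_bigA _ _ _ _ _ (fun f T => if valid_idx (f, T) then 1%N else 0%N)).
rewrite big_ord_recl big_ord_recl big_ord_recl big_ord0 /=.
rewrite -!big_mkcond /= !sum1_card.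
rewrite (eq_card (B := [pred T : {set 'I_n'.+1} | (T != set0) && [forall k in T, (val k < n')%N]])) //.
rewrite count_f0.
rewrite (eq_card (B := [pred T : {set 'I_n'.+1} | (T != set0) && (T != setT)])) // count_f1.
have := expn_gt0 2 n'; rewrite !expnS /=; lia.
Qed.

Local Open Scope ring_scope.

Section S.
Variable R : realType.
Variable n' : nat.
Local Notation N := n'.+1.

Lemma reduce (i : ineq_idx N) (q : 'I_N -> bool -> bool -> R) (S : R) :
  0 < S -> (forall y d z, 0 <= q y d z) ->
  (forall z, \sum_(y < N) \sum_(d : bool) q y d z = S) ->
  (forall j : ineq_idx N, j != i -> lhs_at j q <= 0) ->
  0 < lhs_at i q ->
  exists P : 'I_N -> bool -> bool -> R,
      obs_law P /\
      (forall j : ineq_idx N, j != i -> lhs_at j (pcond P) <= 0) /\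
      0 < lhs_at i (pcond P).
Proof.
move=> S0 q0 qS Hj Hi.
pose P := fun y d z => q y d z / (S *+ 2).
have PZe z : PZ P z = 2^-1.
  rewrite /PZ; transitivity ((\sum_(y < N) \sum_(d : bool) q y d z) / (S *+ 2)).
    rewrite big_distrl; apply: eq_bigr => y _; rewrite big_distrl //.
  rewrite qS; field; lra.
have pc : pcond P = fun y d z => q y d z / S.
  apply: boolp.funext => y; apply: boolp.funext => d; apply: boolp.funext => z.
  rewrite /pcond PZe /P; field; lra.
have lhsE j : lhs_at j (pcond P) = lhs_at j q / S.
  rewrite pc /lhs_at /ineq_lhs; case: (val (val j).1) => [|[|?]];
  rewrite mulrDl !big_distrl /=; congr (_ + _); apply: eq_bigr => k _; ring.
exists P; split; last split.
- split; first by move=> y d z; rewrite /P divr_ge0 // ?q0 //; lra.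
  split; last by move=> z; rewrite PZe; lra.
  under eq_bigr => y _ do under eq_bigr => d _ do rewrite big_bool.
  under eq_bigr => y _ do rewrite big_split.
  rewrite big_split /=.
  have := PZe true; have := PZe false; rewrite /PZ => -> ->; lra.
- move=> j /Hj hj; rewrite lhsE ler_pdivrMr // mul0r //.
- rewrite lhsE divr_gt0 //.
Qed.


Definition ind (T0 : {set 'I_N}) (k : 'I_N) : R := if k \in T0 then 1 else 0.
Definition mx (k : 'I_N) : R := if k == ord_max then 1 else 0.
Definition mkq (a b c d : 'I_N -> R) : 'I_N -> bool -> bool -> R :=
  fun y dd z => if z then (if dd then d y else c y) else (if dd then b y else a y).

Lemma sum_ind (T0 : {set 'I_N}) : \sum_(k < N) ind T0 k = #|T0|%:R.
Proof. by rewrite /ind -big_mkcond /= sumr_const. Qed.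

Lemma sum_cmx c : \sum_(k < N) c * mx k = c.
Proof.
rewrite (bigD1 ord_max) //= big1 ?addr0 /mx ?eqxx ?mulr1 // => k /negbTE ->.
by rewrite mulr0.
Qed.

Lemma sum_1ind (T0 : {set 'I_N}) : \sum_(k < N) (1 - ind T0 k) = N%:R - #|T0|%:R.
Proof. by rewrite sumrB sum_ind sumr_const card_ord. Qed.

Lemma sum_pm (T T0 : {set 'I_N}) : \sum_(k in T) (ind T0 k - (1 - ind T0 k)) =
  #|T :&: T0|%:R - #|T :\: T0|%:R.
Proof.
rewrite (big_setID T0) /=.
rewrite (eq_bigr (fun _ => 1)); last by move=> k /setIP[_]; rewrite /ind => ->; ring.
rewrite [X in _ + X](eq_bigr (fun _ => -1)); last by move=> k /setDP[_ /negbTE]; rewrite /ind => ->; ring.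
rewrite !sumr_const -mulNrn; ring.
Qed.

Lemma sum_mp (T T0 : {set 'I_N}) : \sum_(k in T) ((1 - ind T0 k) - ind T0 k) =
  #|T :\: T0|%:R - #|T :&: T0|%:R.
Proof.
rewrite -[RHS]opprB -sum_pm -sumrN; apply: eq_bigr => k _; ring.
Qed.

Lemma sub_le_total (x y : 'I_N -> R) (T : {set 'I_N}) :
  (forall k, 0 <= x k) -> (forall k, 0 <= y k) ->
  \sum_(k in T) (x k - y k) <= \sum_(k < N) x k.
Proof.
move=> hx hy; apply: (@le_trans _ _ (\sum_(k in T) x k)).
  by apply: ler_sum => k _; rewrite lerBlDr lerDl.
rewrite [X in _ <= X](bigID (fun k => k \in T)) /= lerDl sumr_ge0 //.
Qed.

Lemma pm_lt (T T0 : {set 'I_N}) : T != T0 ->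
  (#|T :&: T0| + 1 <= #|T0| + #|T :\: T0|)%N.
Proof.
move=> ne; have [|] := boolP (T :\: T0 == set0).
  rewrite setD_eq0 => sub; have -> : T :&: T0 = T by apply/setIidPl.
  have : T \proper T0 by rewrite properEneq ne.
  move/proper_card; lia.
rewrite -card_gt0 => h; have := subset_leq_card (subsetIr T T0); lia.
Qed.

Lemma pm_bound (T T0 : {set 'I_N}) : T != T0 ->
  (#|T :&: T0|%:R - #|T :\: T0|%:R : R) <= #|T0|%:R - 1.
Proof.
move/pm_lt; rewrite -(ler_nat R) !natrD => h; lra.
Qed.

Lemma pm_eq (T0 : {set 'I_N}) :
  (#|T0 :&: T0|%:R - #|T0 :\: T0|%:R : R) = #|T0|%:R.
Proof. by rewrite setIid setDv cards0 subr0. Qed.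

Lemma sub_max (T : {set 'I_N}) : [forall k in T, (val k < n')%N] ->
  T \subset [set~ ord_max].
Proof.
move=> /forall_inP H; apply/subsetP => k /H; rewrite !inE.
by rewrite -(inj_eq val_inj) /= ltn_neqAle -ltnS ltn_ord andbT.
Qed.

Lemma diff_bound (T T0 : {set 'I_N}) :
  T \subset [set~ ord_max] -> T0 \subset [set~ ord_max] ->
  (#|T :\: T0| + #|T0| <= n')%N.
Proof.
move=> h1 h2.
have := cardsID T0 (T :|: T0).
have -> : (T :|: T0) :&: T0 = T0 by apply/setIidPr; apply: subsetUr.
rewrite setDUl setDv setU0 addnC => ->.
have hs : T :|: T0 \subset [set~ ord_max] by rewrite subUset h1 h2.
by have := subset_leq_card hs; rewrite cardsC1 card_ord.
Qed.


Lemma mkq_tot0 a b c d :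
  \sum_(y < N) \sum_(dd : bool) mkq a b c d y dd false = \sum_(y < N) b y + \sum_(y < N) a y.
Proof.
under eq_bigr => y _ do rewrite big_bool.
by rewrite big_split.
Qed.

Lemma mkq_tot1 a b c d :
  \sum_(y < N) \sum_(dd : bool) mkq a b c d y dd true = \sum_(y < N) d y + \sum_(y < N) c y.
Proof.
under eq_bigr => y _ do rewrite big_bool.
by rewrite big_split.
Qed.

Lemma mkq_ge0 a b c d : (forall k, 0 <= a k) -> (forall k, 0 <= b k) ->
  (forall k, 0 <= c k) -> (forall k, 0 <= d k) -> forall y dd z, 0 <= mkq a b c d y dd z.
Proof. by move=> ha hb hc hd y [] []; rewrite /mkq. Qed.

Lemma ind_ge0 (T0 : {set 'I_N}) (k : 'I_N) : 0 <= ind T0 k.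
Proof. rewrite /ind; case: ifP => _ //; lra. Qed.
Lemma ind1_ge0 (T0 : {set 'I_N}) (k : 'I_N) : 0 <= 1 - ind T0 k.
Proof. rewrite /ind; case: ifP => _; lra. Qed.
Lemma cmx_ge0 (c : R) (k : 'I_N) : 0 <= c -> 0 <= c * mx k.
Proof. move=> c0; rewrite /mx; case: ifP => _; lra. Qed.

Lemma neq_idx g T Hj f T0 Hi :
  (exist _ (g, T) Hj : ineq_idx N) != exist _ (f, T0) Hi -> val g = val f -> T != T0.
Proof.
move=> H E; apply: contra H => /eqP E2; apply/eqP; apply: val_inj => /=.
by rewrite E2 (val_inj E).
Qed.


Lemma case0 (T0 : {set 'I_N}) (hf : (0 < 3)%N) (Hi : valid_idx (Ordinal hf, T0)) :
  exists P : 'I_N -> bool -> bool -> R,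
      obs_law P /\
      (forall j : ineq_idx N, j != exist _ (Ordinal hf, T0) Hi -> lhs_at j (pcond P) <= 0) /\
      0 < lhs_at (exist _ (Ordinal hf, T0) Hi) (pcond P).
Proof.
have /andP[ne0 /sub_max sub0] : (T0 != set0) && [forall k in T0, (val k < n')%N] := Hi.
have m1 : (1 <= #|T0|)%N by rewrite card_gt0.
have mn : (#|T0| <= n')%N by have := subset_leq_card sub0; rewrite cardsC1 card_ord.
have m1R : (1 <= #|T0|%:R :> R) by rewrite ler1n.
have mnR : (#|T0|%:R <= n'%:R :> R) by rewrite ler_nat.
pose A : R := n'%:R - #|T0|%:R + 2^-1.
apply: (@reduce _ (mkq (fun k => A * mx k) (ind T0) (fun k => (#|T0|%:R - 2^-1) * mx k) (fun k => 1 - ind T0 k)) (n'%:R + 2^-1)).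
- have := ler0n R n'; lra.
- apply: mkq_ge0 => k; [apply: cmx_ge0 | exact: ind_ge0 | apply: cmx_ge0 | exact: ind1_ge0]; rewrite /A; lra.
- case; [rewrite mkq_tot1 sum_1ind | rewrite mkq_tot0 sum_ind]; rewrite sum_cmx /A -?(natr1 n'); lra.
- move=> [[g T] Hj] Hne; have Hne' := @neq_idx _ _ _ _ _ _ Hne.
  rewrite /lhs_at /=.
  clear Hne; case: g Hj Hne' => [[|[|[|kk]]] hg] Hj Hne' //; rewrite /ineq_lhs /mkq /=.
  + rewrite sumrN sum_cmx sum_pm; have := pm_bound _ _ (Hne' erefl); lra.
  + rewrite sumrN sum_ind.
    have c0 : 0 <= #|T0|%:R - 2^-1 :> R by lra.
    have a0 : 0 <= A by rewrite /A; lra.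
    have := sub_le_total (fun k => (#|T0|%:R - 2^-1) * mx k) (fun k => A * mx k) T
      (fun k => cmx_ge0 _ k c0) (fun k => cmx_ge0 _ k a0).
    rewrite sum_cmx; lra.
  + move: Hj => /andP[_ /sub_max sT].
    rewrite sumrN sum_cmx sum_mp.
    have := diff_bound _ _ sT sub0; rewrite -(ler_nat R) natrD => h.
    have := ler0n R #|T :&: T0|; rewrite /A; lra.
- rewrite /lhs_at /ineq_lhs /mkq /= sumrN sum_cmx sum_pm pm_eq; lra.
Qed.


Lemma case2 (T0 : {set 'I_N}) (hf : (2 < 3)%N) (Hi : valid_idx (Ordinal hf, T0)) :
  exists P : 'I_N -> bool -> bool -> R,
      obs_law P /\
      (forall j : ineq_idx N, j != exist _ (Ordinal hf, T0) Hi -> lhs_at j (pcond P) <= 0) /\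
      0 < lhs_at (exist _ (Ordinal hf, T0) Hi) (pcond P).
Proof.
have /andP[ne0 /sub_max sub0] : (T0 != set0) && [forall k in T0, (val k < n')%N] := Hi.
have m1 : (1 <= #|T0|)%N by rewrite card_gt0.
have mn : (#|T0| <= n')%N by have := subset_leq_card sub0; rewrite cardsC1 card_ord.
have m1R : (1 <= #|T0|%:R :> R) by rewrite ler1n.
have mnR : (#|T0|%:R <= n'%:R :> R) by rewrite ler_nat.
pose C : R := n'%:R - #|T0|%:R + 2^-1.
have c0 : 0 <= #|T0|%:R - 2^-1 :> R by lra.
have a0 : 0 <= C by rewrite /C; lra.
apply: (@reduce _ (mkq (fun k => (#|T0|%:R - 2^-1) * mx k) (fun k => 1 - ind T0 k) (fun k => C * mx k) (ind T0)) (n'%:R + 2^-1)).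
- have := ler0n R n'; lra.
- apply: mkq_ge0 => k; [apply: cmx_ge0 | exact: ind1_ge0 | apply: cmx_ge0 | exact: ind_ge0]; rewrite /C; lra.
- case; [rewrite mkq_tot1 sum_ind | rewrite mkq_tot0 sum_1ind]; rewrite sum_cmx /C -?(natr1 n'); lra.
- move=> [[g T] Hj] Hne; have Hne' := @neq_idx _ _ _ _ _ _ Hne.
  rewrite /lhs_at /=.
  clear Hne; case: g Hj Hne' => [[|[|[|kk]]] hg] Hj Hne' //; rewrite /ineq_lhs /mkq /=.
  + move: Hj => /andP[_ /sub_max sT].
    rewrite sumrN sum_cmx sum_mp.
    have := diff_bound _ _ sT sub0; rewrite -(ler_nat R) natrD => h.
    have := ler0n R #|T :&: T0|; rewrite /C; lra.
  + rewrite sumrN sum_1ind.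
    have := sub_le_total (fun k => C * mx k) (fun k => (#|T0|%:R - 2^-1) * mx k) T
      (fun k => cmx_ge0 _ k a0) (fun k => cmx_ge0 _ k c0).
    rewrite sum_cmx /C -(natr1 n'); lra.
  + rewrite sumrN sum_cmx sum_pm; have := pm_bound _ _ (Hne' erefl); lra.
- rewrite /lhs_at /ineq_lhs /mkq /= sumrN sum_cmx sum_pm pm_eq; lra.
Qed.

Lemma case1 (T0 : {set 'I_N}) (hf : (1 < 3)%N) (Hi : valid_idx (Ordinal hf, T0)) :
  exists P : 'I_N -> bool -> bool -> R,
      obs_law P /\
      (forall j : ineq_idx N, j != exist _ (Ordinal hf, T0) Hi -> lhs_at j (pcond P) <= 0) /\
      0 < lhs_at (exist _ (Ordinal hf, T0) Hi) (pcond P).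
Proof.
have /andP[ne0 neT] : (T0 != set0) && (T0 != setT) := Hi.
have m1 : (1 <= #|T0|)%N by rewrite card_gt0.
have mn : (#|T0| <= n')%N.
  have hp : T0 \proper [set: 'I_N] by rewrite properT.
  by have := proper_card hp; rewrite cardsT card_ord.
have m1R : (1 <= #|T0|%:R :> R) by rewrite ler1n.
have mnR : (#|T0|%:R <= n'%:R :> R) by rewrite ler_nat.
pose D : R := n'%:R - #|T0|%:R + 2^-1.
have c0 : 0 <= #|T0|%:R - 2^-1 :> R by lra.
have a0 : 0 <= D by rewrite /D; lra.
apply: (@reduce _ (mkq (fun k => 1 - ind T0 k) (fun k => (#|T0|%:R - 2^-1) * mx k) (ind T0) (fun k => D * mx k)) (n'%:R + 2^-1)).
- have := ler0n R n'; lra.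
- apply: mkq_ge0 => k; [exact: ind1_ge0 | apply: cmx_ge0 | exact: ind_ge0 | apply: cmx_ge0]; rewrite /D; lra.
- case; [rewrite mkq_tot1 sum_ind | rewrite mkq_tot0 sum_1ind]; rewrite sum_cmx /D -?(natr1 n'); lra.
- move=> [[g T] Hj] Hne; have Hne' := @neq_idx _ _ _ _ _ _ Hne.
  rewrite /lhs_at /=.
  clear Hne; case: g Hj Hne' => [[|[|[|kk]]] hg] Hj Hne' //; rewrite /ineq_lhs /mkq /=.
  + rewrite sumrN sum_ind.
    have := sub_le_total (fun k => (#|T0|%:R - 2^-1) * mx k) (fun k => D * mx k) T
      (fun k => cmx_ge0 _ k c0) (fun k => cmx_ge0 _ k a0).
    rewrite sum_cmx; lra.
  + rewrite sumrN sum_cmx sum_pm; have := pm_bound _ _ (Hne' erefl); lra.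
  + rewrite sumrN sum_1ind.
    have := sub_le_total (fun k => D * mx k) (fun k => (#|T0|%:R - 2^-1) * mx k) T
      (fun k => cmx_ge0 _ k a0) (fun k => cmx_ge0 _ k c0).
    rewrite sum_cmx /D -(natr1 n'); lra.
- rewrite /lhs_at /ineq_lhs /mkq /= sumrN sum_cmx sum_pm pm_eq; lra.
Qed.

End S.

Theorem corollary3 (R : realType) (n : nat) (hn : (0 < n)%N) :
  #|{: ineq_idx n}| = (2 ^ n.+1 - 4)%N /\
  forall i : ineq_idx n,
    exists P : 'I_n -> bool -> bool -> R,
      obs_law P /\
      (forall j : ineq_idx n, j != i -> lhs_at j (pcond P) <= 0) /\
      0 < lhs_at i (pcond P).
Proof.
case: n hn => // n' _; split; first exact: count_all.
move=> [[f0 T0] Hi]; case: f0 Hi => [[|[|[|k]]] hf] Hi //.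
- exact: case0.
- exact: case1.
- exact: case2.
Qed.
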